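(* Let $m\ge2$ and $H\le G$, and let $W$ be an $R_mH$-module that is a direct sum of cyclic $R_mH$-submodules $W_k$, each of which is a free $R_m(H/S_k)$-module for some subgroup $S_k\le H$ (acting trivially on $W_k$). Then $W$ does not have property $\mathcal P(H)$.
   Context: $p$ is a prime, $G$ a cyclic group of order $p^n$, $R_m=\mathbb Z/p^m\mathbb Z$. Let $H\le G$ with generator $\tau$. For $m\ge2$, an $R_mH$-module $W$ has property $\mathcal P(H)$ if there exist an integer $s\ge0$ and elements $y,z\in W\setminus\big((\tau^{p^s}-1)W+pW\big)$ such that $(\tau^{p^s}-1)y=p^{m-1}z$. *)

(* Defs.v *)
From HB Require Import structures.
From mathcomp Require Import all_boot all_order all_algebra all_fingroup all_solvable.
Set Implicit Arguments. Unset Strict Implicit. Unset Printing Implicit Defensive.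
Import GRing.Theory.
Local Open Scope ring_scope.

Section Defs.
Variables (gT : finGroupType) (V : zmodType).

(* V with the action [act] of the group H is an R_m H-module, R_m = Z/p^m Z:
   p^m kills V, each h in H acts additively, and the action is a group action. *)
Definition is_RmH_module (p m : nat) (H : {group gT}) (act : gT -> V -> V) : Prop :=
  [/\ forall v : V, v *+ (p ^ m) = 0,
      forall g, g \in H -> forall u v : V, act g (u - v) = act g u - act g v,
      forall v : V, act 1%g v = v
    & forall g h, g \in H -> h \in H -> forall v : V, act (g * h)%g v = act g (act h v)].

(* An R_m H-submodule of V (R_m-scalars are integer multiples). *)
Definition is_submodule (H : {group gT}) (act : gT -> V -> V) (M : V -> Prop) : Prop :=
  [/\ M 0,
      forall u v, M u -> M v -> M (u - v)
    & forall g v, g \in H -> M v -> M (act g v)].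

Definition is_cyclic_submodule (H : {group gT}) (act : gT -> V -> V) (M : V -> Prop) : Prop :=
  exists w : V, forall v : V,
    M v <-> exists c : gT -> int, v = \sum_(g in H) act g w *~ c g.

Definition finite_sum_of (K : Type) (W : K -> V -> Prop) (P : K -> Prop) (v : V) : Prop :=
  exists (r : nat) (ks : 'I_r -> K) (ws : 'I_r -> V),
    (forall i, P (ks i) /\ W (ks i) (ws i)) /\ v = \sum_(i < r) ws i.

Definition is_direct_sum (H : {group gT}) (act : gT -> V -> V) (K : Type) (W : K -> V -> Prop) : Prop :=
  [/\ forall k, is_submodule H act (W k),
      forall v : V, finite_sum_of W (fun _ => True) v
    & forall k (v : V), W k v -> finite_sum_of W (fun k' => k' <> k) v -> v = 0].

(* M is a free R_m(H/S)-module, S acting trivially on M: it has a (finite) basis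
   b_1..b_r over the group ring R_m[H/S], i.e. every element of M is uniquely
   (coefficients in R_m = Z/p^m) a combination  sum_j sum_{C in H/S} c_{j,C} C.b_j,
   where the coset C acts through any representative. *)
Definition is_free_quot_module (p m : nat) (H S : {group gT}) (act : gT -> V -> V)
    (M : V -> Prop) : Prop :=
  (forall g v, g \in S -> M v -> act g v = v) /\
  exists (r : nat) (b : 'I_r -> V),
    [/\ forall j, M (b j),
        forall v, M v -> exists c : 'I_r -> {set gT} -> int,
          v = \sum_(j < r) \sum_(C in rcosets S H) act (repr C) (b j) *~ c j C
      & forall c : 'I_r -> {set gT} -> int,
          \sum_(j < r) \sum_(C in rcosets S H) act (repr C) (b j) *~ c j C = 0 ->
          forall j C, C \in rcosets S H -> ((p ^ m)%N%:Z %| c j C)%Z].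

Definition in_img_plus_p (p s : nat) (tau : gT) (act : gT -> V -> V) (x : V) : Prop :=
  exists u v : V, x = (act (tau ^+ (p ^ s))%g u - u) + v *+ p.

(* Property P(H), H generated by tau. *)
Definition propP (p m : nat) (tau : gT) (act : gT -> V -> V) : Prop :=
  exists (s : nat) (y z : V),
    [/\ ~ in_img_plus_p p s tau act y,
        ~ in_img_plus_p p s tau act z
      & act (tau ^+ (p ^ s))%g y - y = z *+ (p ^ (m - 1))].

End Defs.

(* Main.v *)
From mathcomp Require Import all_boot all_order all_algebra all_fingroup all_solvable.
From mathcomp Require Import ring.
Require Import Defs.
From Stdlib Require Import ClassicalEpsilon.
Import GRing.Theory.
Local Open Scope ring_scope.

Section Add.
Variables (V : zmodType) (f : V -> V).
Hypothesis fB : forall u v, f (u - v) = f u - f v.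
Lemma f0 : f 0 = 0.
Proof. have h := fB 0 0; rewrite !subrr in h; exact: h. Qed.
Lemma fN x : f (- x) = - f x.
Proof. by have h := fB 0 x; rewrite f0 !sub0r in h. Qed.
Lemma fD x y : f (x + y) = f x + f y.
Proof. by have h := fB x (- y); rewrite opprK fN opprK in h. Qed.
Lemma fMn x n : f (x *+ n) = f x *+ n.
Proof. by elim: n => [|n IH]; rewrite ?mulr0n ?f0 // !mulrS fD IH. Qed.
Lemma fMz x z : f (x *~ z) = f x *~ z.
Proof. by case: z => n; [rewrite -!pmulrn fMn | rewrite NegzE !mulrNz fN -!pmulrn fMn]. Qed.
Lemma fsum (I : Type) (r : seq I) (P : pred I) (F : I -> V) :
  f (\sum_(i <- r | P i) F i) = \sum_(i <- r | P i) f (F i).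
Proof. exact: (big_morph f fD f0). Qed.
End Add.

Section Part1.
Variables (gT : finGroupType) (V : zmodType) (p m : nat) (H S : {group gT})
  (act : gT -> V -> V) (M : V -> Prop) (t : gT).
Hypotheses (p0 : (0 < p)%N)
  (actB : forall g, g \in H -> forall u v, act g (u - v) = act g u - act g v)
  (actM : forall g h, g \in H -> h \in H -> forall v, act (g * h)%g v = act g (act h v))
  (Mact : forall g v, g \in H -> M v -> M (act g v))
  (SH : S \subset H) (abH : abelian H) (tH : t \in H)
  (trivS : forall g v, g \in S -> M v -> act g v = v).
Variables (r : nat) (b : 'I_r -> V).
Hypothesis bM : forall j, M (b j).

Local Notation Q := (rcosets S H).

Definition lin (c : 'I_r -> {set gT} -> int) :=
  \sum_(j < r) \sum_(C in Q) act (repr C) (b j) *~ c j C.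

Lemma linE c c' : (forall j C, C \in Q -> c j C = c' j C) -> lin c = lin c'.
Proof.
move=> e; apply: eq_bigr => j _; apply: eq_bigr => C CQ; by rewrite e.
Qed.

Lemma linB c c' : lin (fun j C => c j C - c' j C) = lin c - lin c'.
Proof.
rewrite /lin -sumrB; apply: eq_bigr => j _; rewrite -sumrB.
by apply: eq_bigr => C _; rewrite mulrzBr.
Qed.

Lemma linD c c' : lin (fun j C => c j C + c' j C) = lin c + lin c'.
Proof.
rewrite /lin -big_split; apply: eq_bigr => j _; rewrite -big_split.
by apply: eq_bigr => C _; rewrite mulrzDr.
Qed.

Lemma linMn c (n : nat) : lin (fun j C => c j C * n%:Z) = lin c *+ n.
Proof.
rewrite /lin -sumrMnl; apply: eq_bigr => j _; rewrite -sumrMnl.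
by apply: eq_bigr => C _; rewrite mulrzA pmulrn.
Qed.

Lemma QP C : C \in Q -> exists2 x, x \in H & C = (S :* x)%g.
Proof. by move/rcosetsP. Qed.

Lemma QM C x : C \in Q -> x \in H -> (C :* x)%g \in Q.
Proof.
move=> /QP [y yH ->] xH; rewrite -rcosetM; apply/rcosetsP; exists (y * x)%g => //.
exact: groupM.
Qed.

Lemma reprQ C : C \in Q -> repr C \in H.
Proof.
move=> /QP [y yH ->]; have := mem_repr_rcoset S y; case/rcosetP => s sS ->.
by rewrite groupM // (subsetP SH).
Qed.

Lemma act_coset x y v : x \in H -> y \in H -> (S :* x = S :* y)%g -> M v ->
  act x v = act y v.
Proof.
move=> xH yH e Mv; have : x \in (S :* y)%g by rewrite -e rcoset_refl.
case/rcosetP => s sS ->; rewrite actM //; last exact: (subsetP SH).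
by rewrite trivS //; apply: Mact.
Qed.

Lemma BvT C j : C \in Q ->
  act t (act (repr C) (b j)) = act (repr (C :* t)%g) (b j).
Proof.
move=> CQ; have rH := reprQ _ CQ.
rewrite -actM //; apply: act_coset => //; first exact: groupM.
  exact/reprQ/QM.
case/QP: CQ rH => y yH -> rH.
rewrite -rcosetM rcoset_repr.
have -> : (t * repr (S :* y))%g = (repr (S :* y) * t)%g.
  exact: (centsP abH).
by rewrite rcosetM rcoset_repr rcosetM.
Qed.

Definition gsh (C : {set gT}) := (C :* t^-1)%g.

Lemma gsh_inj : injective gsh.
Proof.
apply: (can_inj (g := fun C => (C :* t)%g)) => C.
by rewrite /gsh -rcosetM mulVg rcoset1.
Qed.

Lemma gshQ C : (gsh C \in Q) = (C \in Q).
Proof.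
apply/idP/idP => h; last by apply: QM; rewrite ?groupV.
have := QM _ _ h tH; by rewrite /gsh -rcosetM mulVg rcoset1.
Qed.

Lemma Dlin c : act t (lin c) - lin c = lin (fun j C => c j (gsh C) - c j C).
Proof.
rewrite linB; congr (_ - _).
rewrite /lin (@fsum _ _ (actB _ tH)); apply: eq_bigr => j _.
rewrite (@fsum _ _ (actB _ tH)).
rewrite (reindex_inj gsh_inj) /=.
apply: eq_big => C; first by rewrite gshQ.
move=> CQ; rewrite (@fMz _ _ (actB _ tH)) BvT //.
by rewrite /gsh -rcosetM mulVg rcoset1.
Qed.

Lemma part1_main (m1 : (1 <= m)%N)
  (span : forall v, M v -> exists c, v = lin c)
  (uniq : forall c, lin c = 0 -> forall j C, C \in Q -> ((p ^ m)%N%:Z %| c j C)%Z)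
  u w : M u -> M w -> act t u - u = w *+ (p ^ (m - 1)) ->
  exists u' v', w = (act t u' - u') + v' *+ p.
Proof.
move=> Mu Mw e.
case: (span u Mu) => a ua; case: (span w Mw) => c wc.
set P1 := (p ^ (m-1))%N.
have hcoef : forall j C, C \in Q ->
    ((p^m)%N%:Z %| (a j (gsh C) - a j C) - c j C * P1%:Z)%Z.
  apply: uniq.
  rewrite (linB (fun j C => a j (gsh C) - a j C) (fun j C => c j C * P1%:Z)).
  by rewrite linMn -Dlin -ua -wc e subrr.
have pm : (p ^ m)%N%:Z = P1%:Z * p%:Z.
  have em : m = (m-1).+1 by rewrite subn1 prednK.
  by rewrite -PoszM /P1 -expnSr -em.
have P1n0 : P1%:Z != 0 by rewrite eqz_nat -lt0n expn_gt0 p0.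
have hc1 : forall j C, C \in Q -> (P1%:Z %| a j (gsh C) - a j C)%Z.
  move=> j C CQ; have := hcoef j C CQ; rewrite pm => h.
  have h2 := dvdz_trans (dvdz_mulr p%:Z (dvdzz P1%:Z)) h.
  rewrite -(subrK (c j C * P1%:Z) (a j (gsh C) - a j C)).
  by apply: rpredD => //; apply: dvdz_mull; apply: dvdzz.
pose rt C := fingraph.root (frel gsh) C.
have rtg : forall C, rt (gsh C) = rt C.
  move=> C; apply/eqP; rewrite /rt root_connect; last exact: fconnect_sym gsh_inj.
  by rewrite fconnect_sym ?fconnect1 //; exact: gsh_inj.
have hiter : forall j n C, C \in Q ->
    (P1%:Z %| a j (iter n gsh C) - a j C)%Z /\ iter n gsh C \in Q.
  move=> j; elim => [|n IH] C CQ /=; first by rewrite subrr dvdz0.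
  case: (IH C CQ) => h1 h2; split; last by rewrite gshQ.
  have -> : a j (gsh (iter n gsh C)) - a j C =
     (a j (gsh (iter n gsh C)) - a j (iter n gsh C)) + (a j (iter n gsh C) - a j C).
    by rewrite addrA subrK.
  by apply: rpredD => //; apply: hc1.
have hrt : forall j C, C \in Q -> (P1%:Z %| a j (rt C) - a j C)%Z.
  move=> j C CQ; rewrite /rt -(iter_findex (connect_root _ C)).
  exact: (hiter j _ C CQ).1.
pose d j C := ((a j C - a j (rt C)) %/ P1%:Z)%Z.
have dK : forall j C, C \in Q -> d j C * P1%:Z = a j C - a j (rt C).
  move=> j C CQ; rewrite /d divzK //.
  by rewrite -opprB rpredN hrt.
have key : forall j C, C \in Q -> (p%:Z %| c j C - (d j (gsh C) - d j C))%Z.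
  move=> j C CQ; rewrite -(dvdz_mul2r P1n0) mulrBl mulrBl !dK ?gshQ // rtg.
  rewrite [X in (_ %| X)%Z](_ : _ = - ((a j (gsh C) - a j C) - c j C * P1%:Z)); last by ring.
  by rewrite rpredN (mulrC p%:Z) -pm hcoef.
pose e' j C := ((c j C - (d j (gsh C) - d j C)) %/ p%:Z)%Z.
exists (lin d), (lin e').
rewrite Dlin -linMn.
rewrite -(linD (fun j C => d j (gsh C) - d j C) (fun j C => e' j C * p%:Z)) wc.
apply: linE => j C CQ; rewrite /e' divzK ?key //.
by rewrite addrC subrK.
Qed.

End Part1.


Lemma In_nth (T : Type) (x0 : T) (s : seq T) i : (i < size s)%N -> List.In (nth x0 s i) s.
Proof.
elim: s i => [|x s IH] [|i] //= h; [by left | right; exact: IH].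
Qed.

Lemma In_filter (T : Type) (P : pred T) (s : seq T) x : List.In x (filter P s) -> List.In x s.
Proof.
elim: s => [|y s IH] //=; case: (P y) => /= [[->|h]|h]; by [left | right; apply: IH].
Qed.

Lemma In_map (T U : Type) (f : T -> U) (s : seq T) x : List.In x (map f s) -> exists y, x = f y.
Proof.
elim: s => [|y s IH] //= [<-|h]; [by exists y | exact: IH].
Qed.

Arguments In_filter {T P s x}.

Lemma In_filter_P (T : Type) (P : pred T) (s : seq T) x : List.In x (filter P s) -> P x.
Proof.
elim: s => [|y s IH] //=; case E: (P y) => /=.
  by case=> [<-|h]; [rewrite E | exact: IH].
exact: IH.
Qed.
Arguments In_filter_P {T P s x}.
Arguments In_nth {T} x0 {s i}.
Arguments In_map {T U f s x}.

Section Part2.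
Variables (gT : finGroupType) (V : zmodType) (H : {group gT}) (act : gT -> V -> V)
  (K : Type) (W : K -> V -> Prop) (t : gT) (p P1 : nat).
Hypotheses (tH : t \in H) (tB : forall u v, act t (u - v) = act t u - act t v)
  (Wsub : forall k, is_submodule H act (W k))
  (dir : forall k v, W k v -> finite_sum_of W (fun k' => k' <> k) v -> v = 0)
  (comp : forall k u w, W k u -> W k w -> act t u - u = w *+ P1 ->
       exists u' v', w = (act t u' - u') + v' *+ p).

Definition Iz (x : V) := exists u v, x = (act t u - u) + v *+ p.

Lemma Iz0 : Iz 0.
Proof. by exists 0, 0; rewrite (@f0 _ _ tB) subrr mul0rn addr0. Qed.

Lemma IzD x y : Iz x -> Iz y -> Iz (x + y).
Proof.
move=> [u1 [v1 ->]] [u2 [v2 ->]]; exists (u1 + u2), (v1 + v2).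
rewrite (@fD _ _ tB) mulrnDl opprD addrACA; congr (_ + _); exact: addrACA.
Qed.

Lemma WD k u v : W k u -> W k v -> W k (u + v).
Proof.
move: (Wsub k); rewrite /is_submodule => -[W0 WB _] hu hv; rewrite -[v]opprK -[- v]sub0r.
by apply: (WB) => //; apply: (WB).
Qed.

Lemma WN k u : W k u -> W k (- u).
Proof. by move: (Wsub k); rewrite /is_submodule => -[W0 WB _] hu; rewrite -sub0r; apply: (WB). Qed.

Lemma WMn k u n : W k u -> W k (u *+ n).
Proof.
move=> hu; elim: n => [|n IH]; first by rewrite mulr0n; by move: (Wsub k); rewrite /is_submodule => -[].
by rewrite mulrS; apply: WD.
Qed.

Lemma Wsum k (T : Type) (s : seq T) (G : T -> V) :
  (forall x, List.In x s -> W k (G x)) -> W k (\sum_(x <- s) G x).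
Proof.
elim: s => [|x s IH] h; first by rewrite big_nil; by move: (Wsub k); rewrite /is_submodule => -[].
rewrite big_cons; apply: WD; [apply: h; left | apply: IH => y hy; apply: h; right] => //.
Qed.

Definition good (x : K * (V * V)) := W x.1 x.2.1 /\ W x.1 x.2.2.
Definition Fx (x : K * (V * V)) := act t x.2.1 - x.2.1 - x.2.2 *+ P1.

Lemma sumF (s : seq (K * (V * V))) :
  \sum_(x <- s) Fx x = act t (\sum_(x <- s) x.2.1) - \sum_(x <- s) x.2.1 - (\sum_(x <- s) x.2.2) *+ P1.
Proof. by rewrite /Fx !sumrB sumrMnl (@fsum _ _ tB). Qed.

Lemma part2 n : forall s : seq (K * (V * V)), (size s <= n)%N ->
  (forall x, List.In x s -> good x) -> \sum_(x <- s) Fx x = 0 ->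
  Iz (\sum_(x <- s) x.2.2).
Proof.
elim: n => [|n IH] [|x0 s'] //= hs hg hF; rewrite ?big_nil; try exact: Iz0.
set s := x0 :: s' in hg hF *.
pose k0 := x0.1.
pose Pb (x : K * (V * V)) := if excluded_middle_informative (x.1 = k0) then true else false.
have PbP : forall x, Pb x = true <-> x.1 = k0.
  by move=> x; rewrite /Pb; case: excluded_middle_informative.
have split_sum : forall G : K * (V * V) -> V,
    \sum_(x <- s) G x = \sum_(x <- filter Pb s) G x + \sum_(x <- filter (predC Pb) s) G x.
  by move=> G; rewrite !big_filter [LHS](bigID Pb).
have g1 : forall x, List.In x (filter Pb s) -> good x /\ x.1 = k0.
  move=> x hx; split; first exact: hg (In_filter hx).
  by apply/PbP; exact: In_filter_P hx.
have g2 : forall x, List.In x (filter (predC Pb) s) -> good x /\ x.1 <> k0.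
  move=> x hx; split; first exact: hg (In_filter hx).
  by move=> /PbP h1; have := In_filter_P hx; rewrite /= h1.
set E1 := \sum_(x <- filter Pb s) Fx x.
set E2 := \sum_(x <- filter (predC Pb) s) Fx x.
have E12 : E1 + E2 = 0 by rewrite -split_sum.
have WE1 : W k0 E1.
  apply: Wsum => x /g1 [[h1 h2] <-]; rewrite /Fx.
  move: (Wsub x.1); rewrite /is_submodule => -[_ WB Wact].
  apply: (WB); last exact: WMn.
  apply: (WB) => //; apply: (Wact) => //.
have E1z : E1 = 0.
  apply: (dir _ _ WE1).
  exists (size (filter (predC Pb) s)), (fun i => (nth x0 (filter (predC Pb) s) i).1),
    (fun i => - Fx (nth x0 (filter (predC Pb) s) i)).
  split.
    move=> i; have /g2 [[h1 h2] h3] := In_nth x0 (ltn_ord i); split => //.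
    apply: WN; rewrite /Fx.
    move: (Wsub (nth x0 (filter (predC Pb) s) i).1); rewrite /is_submodule => -[_ WB Wact].
    apply: (WB); last exact: WMn.
    apply: (WB) => //; apply: (Wact) => //.
  have -> : E1 = - E2 by apply/eqP; rewrite -addr_eq0 E12.
  by rewrite /E2 (big_nth x0) big_mkord sumrN.
have E2z : E2 = 0 by rewrite -E12 E1z add0r.
rewrite split_sum; apply: IzD.
  have [Wu Ww] : W k0 (\sum_(x <- filter Pb s) x.2.1) /\ W k0 (\sum_(x <- filter Pb s) x.2.2).
    by split; apply: Wsum => x /g1 [[h1 h2] <-].
  apply: (comp _ _ _ Wu Ww); apply/eqP; rewrite -subr_eq0 -sumF; exact/eqP.
apply: IH => //.
  rewrite size_filter /= /predC /=.
  have -> : Pb x0 = true by apply/PbP.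
  by rewrite /= (leq_trans (count_size _ _) hs).
by move=> x /g2 [].
Qed.

End Part2.

Theorem corollary4p3 (p n m : nat) (gT : finGroupType) (G H : {group gT}) (tau : gT)
    (V : zmodType) (act : gT -> V -> V) (K : Type) (W : K -> V -> Prop)
    (S : K -> {group gT}) :
  prime p -> cyclic G -> #|G| = (p ^ n)%N -> H \subset G ->
  (H : {set gT}) = <[tau]>%g -> (2 <= m)%N ->
  is_RmH_module p m H act ->
  is_direct_sum H act W ->
  (forall k, [/\ is_cyclic_submodule H act (W k), S k \subset H
                & is_free_quot_module p m H (S k) act (W k)]) ->
  ~ propP p m tau act.
Proof.
move=> pr _ _ _ Htau m2 [_ actB _ actM] [Wsub span dir] hk [s [y [z [ny nz e]]]].
pose t := (tau ^+ (p ^ s))%g.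
have tH : t \in H by rewrite Htau mem_cycle.
have abH : abelian H by rewrite Htau; exact: cycle_abelian.
have p0 : (0 < p)%N by exact: prime_gt0.
have m1 : (1 <= m)%N by exact: ltnW.
have comp : forall k u w, W k u -> W k w -> act t u - u = w *+ (p ^ (m - 1)) ->
       exists u' v', w = (act t u' - u') + v' *+ p.
  move=> k u w Wu Ww euw.
  case: (hk k) => _ SkH [trivS [r [b [bM spanb uniqb]]]].
  have [_ _ Mact] := Wsub k.
  exact: (@part1_main gT V p m H (S k) act (W k) t p0 actB actM Mact SkH abH tH trivS r b bM m1 spanb uniqb u w Wu Ww euw).
have Hz : Iz gT V act t p z.
  case: (span y) => ry [ky [ys [hy ey]]].
  case: (span z) => rz [kz [zs [hz ez]]].
  pose sy := [seq (ky i, (ys i, (0 : V))) | i <- index_enum 'I_ry].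
  pose sz := [seq (kz i, ((0 : V), zs i)) | i <- index_enum 'I_rz].
  have W0 : forall k, W k 0 by move=> k; have [] := Wsub k.
  have s1 : \sum_(x <- sy ++ sz) x.2.1 = y.
    by rewrite big_cat !big_map /= ey [X in _ + X]big1 ?addr0.
  have s2 : \sum_(x <- sy ++ sz) x.2.2 = z.
    by rewrite big_cat !big_map /= ez [X in X + _]big1 ?add0r.
  rewrite -s2.
  apply: (@part2 gT V H act K W t p (p ^ (m - 1)) tH (actB _ tH) Wsub dir comp (size (sy ++ sz))) => //.
    move=> x hx; case: (List.in_app_or _ _ _ hx) => hx'.
      by case: (In_map hx') => i ->; rewrite /good /=; case: (hy i).
    by case: (In_map hx') => i ->; rewrite /good /=; case: (hz i).
  by rewrite (@sumF gT V act K t _ (actB _ tH)) s1 s2 e subrr.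
exact: nz.
Qed.
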